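(* Let $z_1,\ldots,z_N$ be points on the unit circle and $P(z)=\prod_{i=1}^N(z-z_i)$. Then there exists $w\in\mathbb{C}$ with $|w|=1$ such that $|P(w)P(-w)|=1$. *)

(* Defs.v *)
From Stdlib Require Import Reals List.
Import ListNotations.
Open Scope R_scope.

(** The complex plane C = R x R, z = (Re z, Im z). *)
Definition Cplx : Type := (R * R)%type.

Definition C1 : Cplx := (1, 0).
Definition Csub (z w : Cplx) : Cplx := (fst z - fst w, snd z - snd w).
Definition Copp (z : Cplx) : Cplx := (- fst z, - snd z).
Definition Cmul (z w : Cplx) : Cplx :=
  (fst z * fst w - snd z * snd w, fst z * snd w + snd z * fst w).
Definition Cmod (z : Cplx) : R := sqrt (fst z ^ 2 + snd z ^ 2).

Definition Pz (zs : list Cplx) (z : Cplx) : Cplx :=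
  fold_right (fun zi acc => Cmul (Csub z zi) acc) C1 zs.

(* Main.v *)
Require Import Defs.
From Stdlib Require Import Reals List Lra Lia.
From Coquelicot Require Coquelicot.
Open Scope R_scope.

Module H.
Import Coquelicot.Coquelicot.

Fixpoint csum (f : nat -> C) (n : nat) : C :=
  match n with O => RtoC 0 | S n => (csum f n + f n)%C end.
Fixpoint rsum (f : nat -> R) (n : nat) : R :=
  match n with O => 0 | S n => rsum f n + f n end.

Lemma csum_ext f g n : (forall k, f k = g k) -> csum f n = csum g n.
Proof. intro E; induction n; simpl; [reflexivity| rewrite IHn, E; reflexivity]. Qed.
Lemma csum_minus f g n : csum (fun k => f k - g k)%C n = (csum f n - csum g n)%C.
Proof. induction n; simpl. ring. rewrite IHn; ring. Qed.
Lemma csum_scal a f n : csum (fun k => a * f k)%C n = (a * csum f n)%C.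
Proof. induction n; simpl. ring. rewrite IHn; ring. Qed.
Lemma csum_one n : csum (fun _ => RtoC 1) n = RtoC (INR n).
Proof. induction n; simpl csum. reflexivity. rewrite IHn, S_INR, RtoC_plus. reflexivity. Qed.
Lemma csum_mod f n : Cmod (csum f n) <= rsum (fun k => Cmod (f k)) n.
Proof. induction n; simpl. rewrite Cmod_0; lra.
  eapply Rle_trans. apply Cmod_triangle. lra. Qed.

Lemma rsum_big g n : INR n <= rsum g n -> (0 < n)%nat -> exists k, (k < n)%nat /\ 1 <= g k.
Proof.
  induction n; intros H Hn. lia.
  cbn [rsum] in H. rewrite S_INR in H.
  destruct (Rle_dec 1 (g n)) as [h|h]. exists n; split; [lia|exact h].
  destruct n. simpl in H. lra.
  destruct IHn as [k [Hk Hg]]. lra. lia. exists k; split; [lia|exact Hg].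
Qed.

Definition Pz' (l : list C) (u : C) : C := fold_right (fun b acc => (u - b) * acc)%C (RtoC 1) l.

Definition cis (a : R) : C := (cos a, sin a).

Lemma cis_pow a k : (cis a ^ k)%C = cis (INR k * a).
Proof. induction k. simpl. unfold cis. rewrite Rmult_0_l, cos_0, sin_0. reflexivity.
  rewrite Cpow_S, IHk, S_INR. unfold cis.
  replace ((INR k + 1) * a) with (a + INR k * a) by ring.
  rewrite cos_plus, sin_plus. unfold Cmult; simpl. f_equal; ring. Qed.

Lemma Cmod_cis a : Cmod (cis a) = 1.
Proof. unfold Cmod, cis; simpl.
  replace (cos a * (cos a * 1) + sin a * (sin a * 1)) with 1. apply sqrt_1.
  pose proof (sin2_cos2 a). unfold Rsqr in *. nra. Qed.

Lemma cos_ne1 x : 0 < x < 2 * PI -> cos x <> 1.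
Proof. intros Hx E. replace x with (2 * (x/2)) in E by field.
  rewrite cos_2a_sin in E. assert (0 < sin (x/2)) by (apply sin_gt_0; lra). nra. Qed.

Lemma geom (e : C) M : e <> RtoC 1 -> (e ^ M)%C = RtoC 1 -> csum (fun k => e ^ k)%C M = RtoC 0.
Proof.
  intros Hn Hm.
  assert (G : forall n, ((1 - e) * csum (fun k => e ^ k) n = 1 - e ^ n)%C).
  { induction n; simpl csum. simpl. ring. rewrite Cpow_S. 
    replace ((1 - e) * (csum (fun k : nat => (e ^ k)%C) n + e ^ n))%C with
      ((1 - e) * csum (fun k : nat => (e ^ k)%C) n + (1-e)* e ^ n)%C by ring.
    rewrite IHn. ring. }
  specialize (G M). rewrite Hm in G.
  assert (Hne : (1 - e)%C <> RtoC 0). { intro Z. apply Hn.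
    replace e with (1 - (1 - e))%C by ring. rewrite Z. ring. }
  replace (csum (fun k : nat => (e ^ k)%C) M) with (/ (1 - e) * ((1 - e) * csum (fun k : nat => (e ^ k)%C) M))%C by (field; exact Hne).
  rewrite G. ring.
Qed.

Section S.
Variable c : C.
Hypothesis hc : Cmod c = 1.
Variable N : nat.
Let M := S N.
Let a := 2 * PI / INR M.
Definition xi k := (c * cis a ^ k)%C.
Definition T m (q : C -> C) := csum (fun k => Cconj (xi k) ^ m * q (xi k))%C M.

Lemma Cmod_xi k : Cmod (xi k) = 1.
Proof. unfold xi. rewrite Cmod_mult, Cmod_pow, Cmod_cis, hc, pow1. ring. Qed.

Lemma unit_xi k : (Cconj (xi k) * xi k = 1)%C.
Proof. rewrite Cmult_comm, <- Cmod2_conj, Cmod_xi. simpl. f_equal; ring. Qed.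

Lemma Mpos : 0 < INR M.
Proof. apply lt_0_INR. unfold M; lia. Qed.

Lemma T_step m b q : T (S m) (fun u => (u - b) * q u)%C = (T m q - b * T (S m) q)%C.
Proof.
  unfold T. rewrite <- csum_scal, <- csum_minus. apply csum_ext. intro k.
  rewrite Cpow_S. pose proof (unit_xi k) as U.
  set (A := Cconj (xi k)) in *. set (x := xi k) in *.
  replace (A * A ^ m * ((x - b) * q x))%C with ((A * x) * (A ^ m * q x) - b * (A * A ^ m * q x))%C by ring.
  rewrite U. ring.
Qed.

Lemma T_base m : (0 < m < M)%nat -> T m (fun _ => RtoC 1) = RtoC 0.
Proof.
  intro Hm. unfold T.
  set (e := (Cconj (cis a) ^ m)%C).
  rewrite (csum_ext _ (fun k => Cconj c ^ m * e ^ k)%C).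
  2:{ intro k. unfold xi, e. rewrite Cmult_conj, Cpow_mult_l, Cpow_conj.
      rewrite <- !Cpow_mult_r, Nat.mul_comm. ring. }
  rewrite csum_scal, geom. ring.
  - unfold e. rewrite <- Cpow_conj, cis_pow. unfold cis, Cconj. simpl. intro E.
    injection E; intros _ E1. revert E1. apply cos_ne1.
    pose proof Mpos. pose proof PI_RGT_0.
    assert (0 < INR m) by (apply lt_0_INR; lia).
    assert (INR m < INR M) by (apply lt_INR; lia).
    unfold a. split. apply Rmult_lt_0_compat; [lra|]. apply Rdiv_lt_0_compat; lra.
    replace (INR m * (2 * PI / INR M)) with (2 * PI * (INR m / INR M)) by (field; lra).
    assert (INR m / INR M < 1). { apply (Rmult_lt_reg_r (INR M)); [lra|]. unfold Rdiv. rewrite Rmult_assoc, Rinv_l by lra. lra. } nra.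
  - unfold e. rewrite <- Cpow_mult_r, Nat.mul_comm, Cpow_mult_r, <- Cpow_conj, cis_pow.
    unfold a. replace (INR M * (2 * PI / INR M)) with (2 * PI) by (pose proof Mpos; field; lra).
    unfold cis. rewrite cos_2PI, sin_2PI. unfold Cconj; simpl. replace (-0) with 0 by ring. apply Cpow_1_l.
Qed.

Lemma T_main bs : (length bs < M)%nat ->
  T (length bs) (Pz' bs) = RtoC (INR M) /\
  forall m, (length bs < m < M)%nat -> T m (Pz' bs) = RtoC 0.
Proof.
  induction bs as [|b bs IH]; intro Hl.
  - split. unfold T. simpl Pz'. rewrite (csum_ext _ (fun _ => RtoC 1)). apply csum_one.
      intro k. simpl. ring.
    intros m Hm. apply T_base. simpl in Hm. lia.
  - simpl in Hl. destruct (IH ltac:(lia)) as [H1 H2].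
    change (Pz' (b :: bs)) with (fun u => (u - b) * Pz' bs u)%C. split.
    + simpl length. rewrite T_step, H1, H2 by lia. ring.
    + intros m Hm. destruct m as [|m]. simpl in Hm; lia. rewrite T_step, H2, H2 by (simpl in Hm; lia). ring.
Qed.

Lemma exists_big bs : length bs = N -> exists k, (k < M)%nat /\ 1 <= Cmod (Pz' bs (xi k)).
Proof.
  intro Hl. destruct (T_main bs ltac:(unfold M; lia)) as [H1 _].
  rewrite Hl in H1.
  assert (Hle : INR M <= rsum (fun k => Cmod (Pz' bs (xi k))) M).
  { replace (INR M) with (Cmod (T N (Pz' bs))).
    2:{ rewrite H1, Cmod_R. apply Rabs_right. pose proof Mpos; lra. }
    unfold T. eapply Rle_trans. apply csum_mod. right.
    assert (E : forall n, rsum (fun k => Cmod (Cconj (xi k) ^ N * Pz' bs (xi k))%C) n = rsum (fun k => Cmod (Pz' bs (xi k))) n).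
    { induction n as [|n IH]; simpl. reflexivity. rewrite IH, Cmod_mult, Cmod_pow, Cmod_conj, Cmod_xi, pow1. ring. }
    apply E. }
  apply rsum_big in Hle. exact Hle. unfold M; lia.
Qed.

End S.

Definition wt (c : C) (t : R) : C := (c * cis t)%C.

Lemma cont_Pz c l : continuity (fun t => fst (Pz' l (wt c t))) /\ continuity (fun t => snd (Pz' l (wt c t))).
Proof.
  induction l as [|b l [IH1 IH2]]; simpl.
  - split; apply continuity_const; intros x y; reflexivity.
  - split; intro x.
    + apply continuity_pt_ext with (f := fun t => (fst c * cos t - snd c * sin t - fst b) * fst (Pz' l (wt c t)) - (fst c * sin t + snd c * cos t - snd b) * snd (Pz' l (wt c t))).
      { intro t. unfold wt, cis, Cmult, Cminus, Cplus, Copp; simpl. ring. }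
      apply continuity_minus; apply continuity_mult; auto;
      (apply continuity_minus || apply continuity_plus); try (apply continuity_const; intros ? ?; reflexivity);
      (apply continuity_minus || apply continuity_plus);
      apply continuity_scal; (apply continuity_cos || apply continuity_sin).
    + apply continuity_pt_ext with (f := fun t => (fst c * cos t - snd c * sin t - fst b) * snd (Pz' l (wt c t)) + (fst c * sin t + snd c * cos t - snd b) * fst (Pz' l (wt c t))).
      { intro t. unfold wt, cis, Cmult, Cminus, Cplus, Copp; simpl. ring. }
      apply continuity_plus; apply continuity_mult; auto;
      (apply continuity_minus || apply continuity_plus); try (apply continuity_const; intros ? ?; reflexivity);
      (apply continuity_minus || apply continuity_plus);
      apply continuity_scal; (apply continuity_cos || apply continuity_sin).
Qed.

Lemma Pz'_app l1 l2 u : Pz' (l1 ++ l2) u = (Pz' l1 u * Pz' l2 u)%C.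
Proof. induction l1; simpl. ring. unfold Pz' in *; simpl. rewrite IHl1. ring. Qed.

Lemma Pz'_opp l u : Cmod (Pz' l (- u)%C) = Cmod (Pz' (map Copp l) u).
Proof. induction l; simpl. reflexivity.
  rewrite !Cmod_mult, IHl. f_equal.
  replace (- u - a)%C with (- (u - - a))%C by ring. apply Cmod_opp. Qed.

Lemma Pz_eq l u : Pz l u = Pz' l u.
Proof. induction l; simpl. reflexivity. rewrite IHl. reflexivity. Qed.

Lemma Pz'_root l b : In b l -> Pz' l b = RtoC 0.
Proof. induction l; simpl. tauto. intros [E|E]. subst. ring. rewrite IHl by exact E. ring. Qed.

Lemma main zs : (forall zi, In zi zs -> Cmod zi = 1) ->
  exists w : C, Cmod w = 1 /\ Cmod (Cmult (Pz zs w) (Pz zs (Copp w))) = 1.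
Proof.
  intro hzs. destruct zs as [|c zs'] eqn:Ez.
  - exists (RtoC 1). simpl. split. apply Cmod_1. rewrite <- Cmod_1. f_equal.
    unfold Defs.C1, Cmult, RtoC; simpl; f_equal; ring.
  - rewrite <- Ez in *. assert (hc : Cmod c = 1) by (apply hzs; subst; left; reflexivity).
    set (bs := zs ++ map Copp zs).
    assert (Key : forall w, Cmod (Cmult (Pz zs w) (Pz zs (Copp w))) = Cmod (Pz' bs w)).
    { intro w. rewrite !Pz_eq, Cmod_mult, Pz'_opp. unfold bs. rewrite Pz'_app, Cmod_mult. reflexivity. }
    destruct (exists_big c hc (length bs) bs eq_refl) as [k [Hk Hbig]].
    set (a := 2 * PI / INR (S (length bs))) in *.
    set (h := fun t => fst (Pz' bs (wt c t)) ^ 2 + snd (Pz' bs (wt c t)) ^ 2 - 1).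
    assert (Hc : continuity h).
    { destruct (cont_Pz c bs) as [C1 C2]. unfold h. apply continuity_minus.
      apply continuity_plus; apply continuity_mult; auto; apply continuity_mult; auto;
        apply continuity_const; intros ? ?; reflexivity.
      apply continuity_const; intros ? ?; reflexivity. }
    assert (H0 : h 0 = -1).
    { unfold h, wt, cis. rewrite cos_0, sin_0.
      replace (c * (1, 0))%C with c by (destruct c; unfold Cmult; simpl; f_equal; ring).
      rewrite Pz'_root. simpl. ring. unfold bs. apply in_or_app. left. subst; left; reflexivity. }
    assert (Hmod : forall t, Cmod (Pz' bs (wt c t)) = sqrt (h t + 1)).
    { intro t. unfold h, Cmod. f_equal. ring. }
    assert (Hxi : xi c (length bs) k = wt c (INR k * a)).
    { unfold xi, wt. rewrite cis_pow. reflexivity. }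
    rewrite Hxi, Hmod in Hbig.
    assert (Hpos : 0 <= INR k * a).
    { apply Rmult_le_pos. apply pos_INR. unfold a. apply Rdiv_le_0_compat.
      pose proof PI_RGT_0; lra. apply lt_0_INR; lia. }
    assert (Hh : 0 <= h (INR k * a)).
    { destruct (Rle_dec 0 (h (INR k * a))) as [|n]; [assumption|].
      exfalso. assert (sqrt (h (INR k * a) + 1) < 1).
      { assert (0 <= h (INR k * a) + 1) by (unfold h; nra).
        assert (L : h (INR k * a) + 1 < 1) by (apply Rnot_le_lt in n; lra).
        pose proof (sqrt_lt_1_alt (h (INR k * a) + 1) 1 (conj H L)) as S1.
        rewrite sqrt_1 in S1. exact S1. } lra. }
    destruct (IVT_cor h 0 (INR k * a) Hc Hpos) as [t [_ Ht]].
    { rewrite H0. nra. }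
    exists (wt c t). split.
    + unfold wt. rewrite Cmod_mult, hc, Cmod_cis. ring.
    + rewrite Key, Hmod, Ht. replace (0+1) with 1 by ring. apply sqrt_1.
Qed.

End H.

Theorem mainTheorem13 (zs : list Cplx)
  (hzs : forall zi, In zi zs -> Cmod zi = 1) :
  exists w : Cplx, Cmod w = 1 /\ Cmod (Cmul (Pz zs w) (Pz zs (Copp w))) = 1.
Proof.
  exact (H.main zs hzs).
Qed.
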